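(* Let $\Gamma$ be a (connected, finite) graph. The image of the exterior intersection pairing \[\mathrm H_1(\Gamma)\otimes\mathrm H_1(\Gamma)\to\mathbb Q\cdot E^+,\qquad\gamma_0\otimes\gamma_1\mapsto\sum_{e\in E}e^*(\gamma_0)e^*(\gamma_1)\cdot e\] is exactly the span of the formal sums of the edges of the maximal cut systems of $\Gamma$.
   Context: A graph consists of finite sets of vertices, oriented edges $E$, half-edges, a source map $s$ and a fixed-point-free involution $e\mapsto e^{-1}$ on $E$ with $t(e)=s(e^{-1})$. $\mathbb Q\cdot E^+$ is the vector space with basis the unoriented edges (an oriented edge $e$ is identified with its unoriented class). $\mathrm H_1(\Gamma)=\mathrm H_1(\Gamma,\mathbb Q)$, and for an edge $e$, $e^*\in\mathrm H^1(\Gamma)$ gives the (signed) multiplicity of $e$ in a homology class. A bridge is an edge whose removal (with its inverse) disconnects $\Gamma$. A cut pair is a pair of non-bridge edges $e_0,e_1$ with $e_1\ne e_0^{\pm1}$ such that $\Gamma\setminus\{e_0^{\pm1},e_1^{\pm1}\}$ is disconnected with $s(e_0)$ and $s(e_1)$ in different components. The relation on non-bridge edges $e_0\sim e_1$ iff $(e_0,e_1)$ is a cut pair or $e_0=e_1$ is an equivalence relation; its equivalence classes are the maximal cut systems (possibly of size $1$). The formal sum of a maximal cut system is the sum in $\mathbb Q\cdot E^+$ of the unoriented classes of its edges. *)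

(* Defs.v *)
From HB Require Import structures.
From mathcomp Require Import all_boot all_order all_algebra.
Set Implicit Arguments. Unset Strict Implicit. Unset Printing Implicit Defensive.
Import Order.TTheory GRing.Theory Num.Theory.
Local Open Scope ring_scope.

(* A finite graph: vertices, oriented edges, source map, and a
   fixed-point-free involution e |-> e^{-1}; t(e) := s(e^{-1}).
   (Half-edges/legs not belonging to edges play no role in H_1 or in
   the notions below and are omitted.) *)
Record graph := Graph {
  vert : finType;
  edge : finType;
  src : edge -> vert;
  einv : edge -> edge;
  einvK : involutive einv;
  einv_neq : forall e, einv e != e
}.

Section GraphDefs.
Variable G : graph.
Local Notation V := (vert G).
Local Notation E := (edge G).
Local Notation s := (@src G).
Local Notation inv := (@einv G).

Definition tgt (e : E) : V := s (inv e).

Definition adj (P : pred E) : rel V :=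
  fun x y => [exists e, [&& P e, s e == x & tgt e == y]].

Definition connected_using (P : pred E) : bool :=
  [forall x, forall y, connect (adj P) x y].

Definition gconnected : bool := connected_using predT.

Definition bridge (e : E) : bool :=
  ~~ connected_using (fun e' => (e' != e) && (e' != inv e)).

Definition cut_pair (e0 e1 : E) : bool :=
  [&& ~~ bridge e0, ~~ bridge e1, e1 != e0, e1 != inv e0 &
      ~~ connect (adj (fun e' => [&& e' != e0, e' != inv e0, e' != e1 & e' != inv e1]))
           (s e0) (s e1)].

(* maximal cut systems: equivalence classes of non-bridge edges for
   e0 ~ e1 <-> (e0, e1) cut pair or e0 = e1 *)
Definition cut_class (e0 : E) : {set E} :=
  [set e1 | ~~ bridge e1 & (e1 == e0) || cut_pair e0 e1].

Definition max_cut_system (C : {set E}) : Prop :=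
  exists e0, ~~ bridge e0 /\ C = cut_class e0.

(* Q.E^+ : functions E -> Q constant on {e, e^{-1}}; the basis vector of
   the unoriented edge [e] is the indicator of {e, e^{-1}}.  An element
   is given by its coordinates, read off at any representative. *)
Definition same_class (e e' : E) : bool := (e' == e) || (e' == inv e).

Definition formal_sum (C : {set E}) : {ffun E -> rat} :=
  [ffun e => \sum_(e' in C | same_class e e') 1].

(* 1-chains with rational coefficients: antisymmetric functions on oriented
   edges; e^*(c) = c e.  Cycles (= H_1, graphs being 1-dimensional). *)
Definition is_cycle (c : {ffun E -> rat}) : Prop :=
  (forall e, c (inv e) = - c e) /\
  (forall v : V, \sum_(e | s e == v) c e = 0).

Definition ext_pairing (g0 g1 : {ffun E -> rat}) : {ffun E -> rat} :=
  [ffun e => \sum_(e' | same_class e e') g0 e' * g1 e'].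

End GraphDefs.

Definition in_span (T : finType) (S : {ffun T -> rat} -> Prop) (x : {ffun T -> rat}) : Prop :=
  exists (n : nat) (a : 'I_n -> rat) (v : 'I_n -> {ffun T -> rat}),
    (forall i, S (v i)) /\ x = [ffun t => \sum_(i < n) a i * v i t].

(* Main.v *)
Require Import Defs.
From mathcomp Require Import all_boot all_order all_algebra.
From mathcomp Require Import ring lra.
Set Implicit Arguments. Unset Strict Implicit. Unset Printing Implicit Defensive.
Import Order.TTheory GRing.Theory Num.Theory.
Local Open Scope ring_scope.

Section Span.
Variable T : finType.
Implicit Types (S : {ffun T -> rat} -> Prop) (x y : {ffun T -> rat}).

Lemma in_span_sum (I : finType) S (P : pred I) (c : I -> rat) (v : I -> {ffun T -> rat}) :
  (forall i, P i -> S (v i)) -> in_span S [ffun t => \sum_(i | P i) c i * v i t].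
Proof.
move=> hS; exists #|P|, (fun k => c (enum_val k)), (fun k => v (enum_val k)); split.
  by move=> k; apply: hS; have := enum_valP k.
apply/ffunP => t; rewrite !ffunE.
by rewrite (big_enum_val (A := P) (fun i => c i * v i t)).
Qed.

Lemma in_span_gen S y : S y -> in_span S y.
Proof.
move=> Sy; exists 1%N, (fun _ => 1), (fun _ => y); split => //.
by apply/ffunP => t; rewrite ffunE big_ord1 mul1r.
Qed.

Lemma in_span0 S : in_span S 0.
Proof.
exists 0%N, (fun _ => 0), (fun _ => 0); split => [[]//|].
by apply/ffunP => t; rewrite !ffunE big_ord0.
Qed.

Lemma in_spanD S x y : in_span S x -> in_span S y -> in_span S (x + y).
Proof.
move=> [n [a [v [hv ->]]]] [m [b [w [hw ->]]]].
pose c (k : ('I_n + 'I_m)%type) := match k with inl i => a i | inr j => b j end.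
pose u (k : ('I_n + 'I_m)%type) := match k with inl i => v i | inr j => w j end.
have -> : [ffun t => \sum_(i < n) a i * v i t] + [ffun t => \sum_(i < m) b i * w i t]
   = [ffun t => \sum_(k | predT k) c k * u k t].
  by apply/ffunP => t; rewrite !ffunE big_sumType.
by apply: in_span_sum => -[i|j] _ /=.
Qed.

Lemma in_spanZ S (k : rat) x : in_span S x -> in_span S [ffun t => k * x t].
Proof.
move=> [n [a [v [hv ->]]]]; exists n, (fun i => k * a i), v; split => //.
apply/ffunP => t; rewrite !ffunE big_distrr /=; apply: eq_bigr => i _.
by rewrite mulrA.
Qed.

Lemma in_span_mono S S' x : in_span S x -> (forall y, S y -> in_span S' y) -> in_span S' x.
Proof.
move=> [n [a [v [hv ->]]]] h.
have -> : [ffun t => \sum_(i < n) a i * v i t] = \sum_(i < n) [ffun t => a i * v i t].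
  by apply/ffunP => t; rewrite sum_ffunE ffunE; apply: eq_bigr => i _; rewrite ffunE.
apply: (big_rec (fun z => in_span S' z)); first exact: in_span0.
move=> i z _ hz; apply: in_spanD => //; apply: in_spanZ; exact: h.
Qed.

End Span.

Lemma arith (Y Z Q : rat) : [\/ Y = 0, Y = 1 | Y = -1] ->
  [\/ Z = 0, Z = 1 /\ Y != 1 | Z = -1 /\ Y != -1] ->
  [\/ Q = 0, Q = 1 /\ 0 < Y + Z | Q = -1 /\ Y + Z < 0] -> Q * (Y + Z - Q) = 0.
Proof.
case=> ->; case=> [->|[-> /eqP h]|[-> /eqP h]]; case=> [->|[-> h']|[-> h']]; try lra.
all: exfalso; try lra.
all: by apply: h.
Qed.

Section Main.
Variable G : graph.
Local Notation V := (vert G).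
Local Notation E := (edge G).
Local Notation s := (@src G).
Local Notation tg := (@tgt G).
Local Notation inv := (@einv G).

Lemma invK : involutive inv. Proof. exact: einvK. Qed.
Lemma inv_neq e : inv e != e. Proof. exact: einv_neq. Qed.
Lemma inv_inj : injective inv. Proof. exact: (can_inj invK). Qed.
Lemma neq_inv e : (e == inv e) = false.
Proof. by apply/negbTE; rewrite eq_sym; apply: inv_neq. Qed.
Lemma tg_inv e : tg (inv e) = s e. Proof. by rewrite /tgt invK. Qed.
Lemma s_inv e : s (inv e) = tg e. Proof. by []. Qed.
Lemma inv_eq a b : (inv a == b) = (a == inv b).
Proof. by apply/eqP/eqP => [<-|->]; rewrite invK. Qed.

Definition symP (P : pred E) := forall e, P (inv e) = P e.

Lemma adjP (P : pred E) a b :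
  reflect (exists e, [/\ P e, s e = a & tg e = b]) (adj P a b).
Proof.
apply: (iffP existsP) => [[e /and3P[Pe /eqP sa /eqP tb]]|[e [Pe sa tb]]].
  by exists e.
by exists e; rewrite Pe sa tb !eqxx.
Qed.

Lemma adj_sym (P : pred E) : symP P -> symmetric (adj P).
Proof.
move=> sP x y; apply/adjP/adjP => -[e [Pe sx ty]]; exists (inv e);
  by rewrite sP tg_inv s_inv.
Qed.

Lemma conn_sym (P : pred E) : symP P -> connect_sym (adj P).
Proof. by move=> sP; apply: sym_connect_sym; apply: adj_sym. Qed.

Lemma closed_conn (P : pred E) (S : pred V) x y :
  (forall e, P e -> S (s e) -> S (tg e)) -> S x -> connect (adj P) x y -> S y.
Proof.
move=> cl Sx /connectP [p pp ->]; elim: p x Sx pp => //= z p IH x Sx.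
case/andP => /adjP[e [Pe sx tz]] pp; apply: IH pp.
by rewrite -tz; apply: cl; rewrite ?sx.
Qed.

Lemma conn_step (P : pred E) x e :
  connect (adj P) x (s e) -> P e -> connect (adj P) x (tg e).
Proof.
move=> c Pe; apply: (connect_trans c); apply: connect1; apply/adjP; by exists e.
Qed.

Lemma conn_all (P : pred E) x :
  symP P -> (forall y, connect (adj P) x y) -> connected_using P.
Proof.
move=> sP h; apply/forallP => a; apply/forallP => b.
apply: (connect_trans (y := x)); last exact: h.
by rewrite conn_sym //; apply: h.
Qed.

Lemma connuP (P : pred E) : connected_using P -> forall x y, connect (adj P) x y.
Proof. by move=> /forallP h x y; move/forallP: (h x); apply. Qed.

Definition rm1 (e : E) : pred E := fun e' => (e' != e) && (e' != inv e).
Definition rm2 (e f : E) : pred E :=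
  fun e' => [&& e' != e, e' != inv e, e' != f & e' != inv f].

Lemma rm1_sym e : symP (rm1 e).
Proof. by move=> e'; rewrite /rm1 !inv_eq invK andbC. Qed.
Lemma rm2_sym e f : symP (rm2 e f).
Proof.
move=> e'; rewrite /rm2 !inv_eq !invK.
by case: (e' == e); case: (e' == inv e); case: (e' == f); case: (e' == inv f).
Qed.

Lemma bridgeE e : bridge e = ~~ connected_using (rm1 e).
Proof. by []. Qed.

Lemma nonbridge_conn e : ~~ bridge e -> forall x y, connect (adj (rm1 e)) x y.
Proof. by rewrite negbK; apply: connuP. Qed.

Lemma gconnP : gconnected G -> forall x y, connect (@adj G predT) x y.
Proof. exact: connuP. Qed.

Lemma nonbridge_of_conn e : gconnected G ->
  connect (adj (rm1 e)) (s e) (tg e) -> ~~ bridge e.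
Proof.
move=> gc c; rewrite negbK; apply: (conn_all (x := s e)); first exact: rm1_sym.
move=> y; apply: (closed_conn (P := predT) (S := connect (adj (rm1 e)) (s e)) (x := s e)) => //.
- move=> e' _ Se'; case R: (rm1 e e'); first exact: conn_step.
  move/negbT: R; rewrite negb_and !negbK => /orP[]/eqP ->; first by [].
  by rewrite tg_inv connect0.
- exact: gconnP.
Qed.

Lemma eq_adj (P P' : pred E) : P =1 P' -> adj P =2 adj P'.
Proof. by move=> h a b; apply: eq_existsb => e'; rewrite h. Qed.

Lemma eq_connu (P P' : pred E) : P =1 P' -> connected_using P = connected_using P'.
Proof.
move=> h; apply: eq_forallb => x; apply: eq_forallb => y.
by apply: eq_connect; apply: eq_adj.
Qed.

Lemma bridge_inv e : bridge (inv e) = bridge e.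
Proof.
rewrite !bridgeE; congr (~~ _).
by apply: eq_connu => e'; rewrite /rm1 invK andbC.
Qed.


Definition uc (e : E) : {ffun E -> rat} := [ffun e' => (e' == e)%:R - (e' == inv e)%:R].
Definition dv (w : {ffun E -> rat}) (v : V) : rat := \sum_(e | s e == v) w e.
Definition antis (w : {ffun E -> rat}) := forall e, w (inv e) = - w e.

Lemma uc_antis e : antis (uc e).
Proof. by move=> e'; rewrite !ffunE inv_eq (inv_eq e' (inv e)) invK opprB. Qed.

Lemma antisD u w : antis u -> antis w -> antis (u + w).
Proof. by move=> hu hw e; rewrite !ffunE hu hw opprD. Qed.
Lemma antis0 : antis 0.
Proof. by move=> e; rewrite !ffunE oppr0. Qed.
Lemma antisN u : antis u -> antis (- u).
Proof. by move=> hu e; rewrite !ffunE hu. Qed.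

Lemma sum_ind (T : finType) (P : pred T) a : \sum_(i | P i) ((i == a)%:R : rat) = (P a)%:R.
Proof.
rewrite big_mkcond /= (bigD1 a) //= eqxx big1 ?addr0 => [|i /negbTE ->].
  by case: (P a).
by case: (P i).
Qed.

Lemma dv_uc e v : dv (uc e) v = (s e == v)%:R - (tg e == v)%:R.
Proof.
rewrite /dv; under eq_bigr do rewrite ffunE.
by rewrite sumrB !sum_ind s_inv.
Qed.

Lemma dvD u w v : dv (u + w) v = dv u v + dv w v.
Proof. by rewrite /dv -big_split; apply: eq_bigr => e _; rewrite ffunE. Qed.
Lemma dvN u v : dv (- u) v = - dv u v.
Proof. by rewrite /dv -sumrN; apply: eq_bigr => e _; rewrite ffunE. Qed.
Lemma dv0 v : dv 0 v = 0.
Proof. by rewrite /dv big1 // => e _; rewrite ffunE. Qed.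

Definition pe (P : pred E) a b := [pick e | P e && (s e == a) && (tg e == b)].
Definition ucp (P : pred E) a b : {ffun E -> rat} :=
  if pe P a b is Some e then uc e else 0.
Fixpoint wc (P : pred E) (x : V) (p : seq V) : {ffun E -> rat} :=
  if p is y :: p' then ucp P x y + wc P y p' else 0.

Lemma ucp_adj (P : pred E) a b : adj P a b ->
  exists e, [/\ P e, s e = a, tg e = b & ucp P a b = uc e].
Proof.
move=> /adjP[e0 [P0 s0 t0]]; rewrite /ucp /pe; case: pickP => [e /andP[/andP[Pe /eqP se] /eqP te]|].
  by exists e.
by move/(_ e0); rewrite P0 s0 t0 !eqxx.
Qed.

Lemma ucp_cases (P : pred E) a b : ucp P a b = 0 \/
  exists e, [/\ P e, s e = a, tg e = b & ucp P a b = uc e].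
Proof.
rewrite /ucp /pe; case: pickP => [e /andP[/andP[Pe /eqP se] /eqP te]|]; last by left.
by right; exists e.
Qed.

Lemma wc_antis P x p : antis (wc P x p).
Proof.
elim: p x => [|y p IH] x /=; first exact: antis0.
apply: antisD => //; case: (ucp_cases P x y) => [->|[e [_ _ _ ->]]].
  exact: antis0.
exact: uc_antis.
Qed.

Lemma wc_dv P x p v : path (adj P) x p ->
  dv (wc P x p) v = (x == v)%:R - (last x p == v)%:R.
Proof.
elim: p x => [|y p IH] x /=; first by rewrite dv0 subrr.
case/andP => /ucp_adj[e [_ se te ->]] pp.
by rewrite dvD dv_uc IH // se te addrA subrK.
Qed.

Lemma wc_out (P : pred E) x p a : ~~ P a -> ~~ P (inv a) -> wc P x p a = 0.
Proof.
move=> na nia; elim: p x => [|y p IH] x /=; first by rewrite ffunE.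
rewrite ffunE IH addr0; case: (ucp_cases P x y) => [->|[e [Pe _ _ ->]]].
  by rewrite ffunE.
rewrite ffunE; case: (eqVneq a e) => [ae|_]; first by rewrite ae Pe in na.
case: (eqVneq a (inv e)) => [ae|_]; last by rewrite subrr.
by rewrite ae invK Pe in nia.
Qed.

Lemma wc_supp_s P x p a : wc P x p a != 0 -> s a \in x :: p.
Proof.
elim: p x => [|y p IH] x /=; first by rewrite ffunE eqxx.
rewrite ffunE; case: (ucp_cases P x y) => [->|[e [Pe se te ->]]].
  rewrite ffunE add0r => /IH; rewrite !inE => ->; by rewrite orbT.
rewrite ffunE; case: (eqVneq a e) => [->|ae]; first by rewrite se inE eqxx.
case: (eqVneq a (inv e)) => [->|aie]; first by rewrite s_inv te !inE eqxx orbT.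
rewrite subrr add0r => /IH; rewrite !inE => ->; by rewrite orbT.
Qed.

Lemma wc_supp_t P x p a : wc P x p a != 0 -> tg a \in x :: p.
Proof.
move=> h; rewrite -s_inv; apply: (wc_supp_s (P := P)).
by rewrite wc_antis oppr_eq0.
Qed.

Definition sv (P : pred E) (w : {ffun E -> rat}) a :=
  [|| w a == 0, (w a == 1) && P a | (w a == -1) && P (inv a)].

Lemma wc_simple P x p a : uniq (x :: p) -> sv P (wc P x p) a.
Proof.
rewrite /sv; elim: p x a => [|y p IH] x a /=; first by rewrite ffunE eqxx.
case/andP => xn up; rewrite ffunE; case: (ucp_cases P x y) => [->|[e [Pe se te ->]]].
  by rewrite ffunE add0r; apply: IH.
have z0 b : s b = x -> wc P y p b = 0.
  move=> sb; apply/eqP; apply: contraNT xn => /wc_supp_s; by rewrite sb.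
rewrite ffunE; case: (eqVneq a e) => [->|ae].
  rewrite neq_inv (z0 e se) addr0 subr0 /= Pe.
  by [].
case: (eqVneq a (inv e)) => [->|aie].
  have -> : wc P y p (inv e) = 0 by rewrite wc_antis (z0 e se) oppr0.
  by rewrite sub0r addr0 invK Pe eqxx /=.
by rewrite subrr add0r; apply: IH.
Qed.

Lemma cut_sum (w : {ffun E -> rat}) (S : pred V) : antis w ->
  \sum_(e | S (s e) && ~~ S (tg e)) w e = \sum_(v | S v) dv w v.
Proof.
move=> aw; rewrite /dv.
have -> : \sum_(v | S v) \sum_(e | s e == v) w e =
          \sum_(v | S v) \sum_(e | S (s e) && (s e == v)) w e.
  apply: eq_bigr => v Sv; apply: eq_bigl => e.
  by case: eqP => [->|]; rewrite ?Sv ?andbF.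
rewrite -(partition_big s S) //.
rewrite (bigID (fun e => S (tg e))) /=.
set X := \sum_(e | S (s e) && S (tg e)) w e.
suff -> : X = 0 by rewrite add0r.
have : X = - X.
  rewrite {1}/X (reindex_inj inv_inj) /= /X -sumrN.
  apply: eq_big => [e|e _]; first by rewrite s_inv tg_inv andbC.
  by rewrite aw.
move=> h; lra.
Qed.

Lemma cycle_cut g (S : pred V) : is_cycle g ->
  \sum_(e | S (s e) && ~~ S (tg e)) g e = 0.
Proof.
case=> ag dg; rewrite cut_sum //; apply: big1 => v _; exact: dg.
Qed.

Lemma cycle_antis g : is_cycle g -> antis g.
Proof. by case. Qed.

Definition cw P e0 p := uc e0 + wc P (tg e0) p.

Lemma cw_cycle P e0 p : path (adj P) (tg e0) p -> last (tg e0) p = s e0 ->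
  is_cycle (cw P e0 p).
Proof.
move=> pp lp; split; first by apply: antisD; [apply: uc_antis| apply: wc_antis].
move=> v; rewrite -[\sum_(e | _) _]/(dv _ v) dvD dv_uc wc_dv // lp.
by rewrite addrA subrK subrr.
Qed.

Lemma cw_out P e0 p a : ~~ P a -> ~~ P (inv a) -> cw P e0 p a = uc e0 a.
Proof. by move=> h1 h2; rewrite /cw ffunE wc_out // addr0. Qed.

Lemma uc_self e : uc e e = 1.
Proof. by rewrite ffunE eqxx neq_inv subr0. Qed.

Lemma uc_other e a : a != e -> a != inv e -> uc e a = 0.
Proof. by move=> /negbTE h1 /negbTE h2; rewrite ffunE h1 h2 subrr. Qed.


Lemma conn_upath (P : pred E) x y : connect (adj P) x y ->
  exists p, [/\ path (adj P) x p, last x p = y & uniq (x :: p)].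
Proof.
case/connectP => p pp ->; case: (shortenP pp) => p' pp' up' _.
by exists p'.
Qed.

Hypothesis gc : gconnected G.
Implicit Types (g u w : {ffun E -> rat}) (e : E).

Lemma nb_cycle e0 : ~~ bridge e0 -> exists g : {ffun E -> rat}, is_cycle g /\ g e0 = 1.
Proof.
move=> nb; have [p [pp lp _]] := conn_upath (nonbridge_conn nb (tg e0) (s e0)).
exists (cw (rm1 e0) e0 p); split; first exact: cw_cycle.
rewrite cw_out ?uc_self // /rm1 ?eqxx ?invK ?eqxx ?andbF //.
Qed.

Lemma bridge_zero e g : bridge e -> is_cycle g -> g e = 0.
Proof.
move=> br cg; set S := connect (adj (rm1 e)) (s e).
have nS : ~~ S (tg e).
  by apply: contraL br => c; apply: nonbridge_of_conn.
have := cycle_cut S cg; rewrite (big_pred1 e) // => e'.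
rewrite /=; apply/idP/eqP => [/andP[Se nSe]|->]; last by rewrite /S connect0 nS.
case R: (rm1 e e').
  by move: nSe; rewrite /S (conn_step Se R).
move/negbT: R; rewrite negb_and !negbK => /orP[]/eqP // ee.
by move: Se; rewrite ee s_inv (negbTE nS).
Qed.

Lemma cut_pair_eq e0 e1 g : cut_pair e0 e1 -> is_cycle g -> g e1 = g e0.
Proof.
case/and5P => nb0 nb1 n10 n1i0 nc cg.
set S := connect (adj (rm2 e0 e1)) (s e0).
have nS1 : ~~ S (s e1) by [].
have nt0 : ~~ S (tg e0).
  apply/negP => St0; apply: (negP nS1).
  apply: (closed_conn (P := rm1 e1) (S := S) (x := s e0) _ (connect0 _ _) (nonbridge_conn nb1 _ _)).
  move=> e' R Se; case R2: (rm2 e0 e1 e'); first exact: conn_step.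
  move: R R2; rewrite /rm1 /rm2 => /andP[-> ->] /= /negbT; rewrite andbT negb_and !negbK.
  by case/orP => /eqP ->; rewrite // tg_inv /S connect0.
have t1 : S (tg e1).
  apply/negPn/negP => nt1; apply: (negP nS1).
  apply: (closed_conn (P := rm1 e0) (S := S) (x := s e0) _ (connect0 _ _) (nonbridge_conn nb0 _ _)).
  move=> e' R Se; case R2: (rm2 e0 e1 e'); first exact: conn_step.
  move: R R2; rewrite /rm1 /rm2 => /andP[-> ->] /= /negbT; rewrite ?andbT negb_and !negbK.
  case/orP => /eqP ee; move: Se; rewrite ee; first by rewrite (negbTE nS1).
  by rewrite s_inv (negbTE nt1).
have := cycle_cut S cg.
have n0i1 : e0 != inv e1 by rewrite eq_sym inv_eq.
rewrite (bigD1 e0) /=; last by rewrite /S connect0 nt0.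
rewrite (big_pred1 (inv e1)) => [h|e'] /=.
  by rewrite (cycle_antis cg) in h; lra.
apply/idP/eqP => [/andP[/andP[Se nSe] ne0]|->]; last first.
  by rewrite s_inv tg_inv t1 nS1 eq_sym n0i1.
case R2: (rm2 e0 e1 e').
  by move: nSe; rewrite /S (conn_step Se R2).
move: R2 ne0; rewrite /rm2 => /negbT; rewrite !negb_and !negbK => /or4P[]/eqP ee; rewrite ee ?eqxx //.
- by move: Se; rewrite ee s_inv (negbTE nt0).
- by move: Se; rewrite ee (negbTE nS1).
Qed.


Definition R0 e0 e := forall g, is_cycle g -> g e = g e0.

Lemma cut_class_char e0 e : ~~ bridge e0 ->
  (e \in cut_class e0) <-> (~~ bridge e /\ R0 e0 e).
Proof.
move=> nb0; rewrite inE; split.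
  case/andP => nbe /orP[/eqP -> | cp]; split => //.
  by move=> g cg; exact: cut_pair_eq.
case=> nbe R; rewrite nbe /=.
case: (eqVneq e e0) => [//|ne0] /=.
have [g0 [cg0 g01]] := nb_cycle nb0.
case: (eqVneq e (inv e0)) => [ei|nei].
  have := R _ cg0; rewrite ei (cycle_antis cg0) g01 => h; exfalso; lra.
apply/and5P; split => //; apply/negP => c1.
case cp: (cut_pair e0 (inv e)).
  have := cut_pair_eq cp cg0; rewrite (cycle_antis cg0) (R _ cg0) g01 => h; exfalso; lra.
have c2 : connect (adj (rm2 e0 e)) (s e0) (tg e).
  move/negbT: cp; rewrite /cut_pair nb0 bridge_inv nbe inv_eq nei.
  rewrite (inj_eq inv_inj) ne0 /= negbK.
  rewrite (@eq_connect _ _ (adj (rm2 e0 e))) //; apply: eq_adj => e'.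
  by rewrite /rm2 invK [(e' != inv e) && _]andbC.
set S := connect (adj (rm2 e0 e)) (s e0).
have St0 : S (tg e0).
  apply: (closed_conn (P := rm1 e0) (S := S) (x := s e0) _ (connect0 _ _) (nonbridge_conn nb0 _ _)).
  move=> e' R1 Se; case R2: (rm2 e0 e e'); first exact: conn_step.
  move: R1 R2; rewrite /rm1 /rm2 => /andP[-> ->] /= /negbT; rewrite ?andbT negb_and !negbK.
  by case/orP => /eqP ->; rewrite ?tg_inv.
have [p [pp lp _]] : exists p, [/\ path (adj (rm2 e0 e)) (tg e0) p, last (tg e0) p = s e0 & uniq (tg e0 :: p)].
  by apply: conn_upath; rewrite conn_sym //; apply: rm2_sym.
have cg := cw_cycle pp lp.
have := R _ cg; rewrite !cw_out; try by rewrite /rm2 ?invK ?eqxx /= ?andbF.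
by rewrite uc_self uc_other // => h; exfalso; lra.
Qed.

Definition Rpm e0 e := R0 e0 e \/ R0 e0 (inv e).

Lemma R0_refl e : R0 e e. Proof. by []. Qed.

Lemma Rpm_sym a b : Rpm a b -> Rpm b a.
Proof.
case=> h; [left|right] => g cg; first by rewrite h.
by rewrite (cycle_antis cg) -(h g cg) (cycle_antis cg) opprK.
Qed.

Lemma Rpm_trans a b c : Rpm a b -> Rpm b c -> Rpm a c.
Proof.
case=> h1 [] h2; [left|right|right|left] => g cg.
- by rewrite (h2 g cg) (h1 g cg).
- by rewrite (h2 g cg) (h1 g cg).
- by rewrite (cycle_antis cg) (h2 g cg) -(h1 g cg) (cycle_antis cg).
- by rewrite -(h1 g cg) (cycle_antis cg b) -(h2 g cg) (cycle_antis cg) opprK.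
Qed.

Definition A e := [set e0 | ~~ bridge e0 && ((e \in cut_class e0) || (inv e \in cut_class e0))].

Lemma A_char e0 e : e0 \in A e <-> [/\ ~~ bridge e0, ~~ bridge e & Rpm e0 e].
Proof.
rewrite inE; split.
  case/andP => nb0 /orP[] /(cut_class_char _ nb0) [nb R]; split => //.
  - by left.
  - by rewrite -bridge_inv.
  - by right.
case=> nb0 nbe [] R; rewrite nb0 /=; apply/orP; [left|right]; apply/cut_class_char => //.
by rewrite bridge_inv.
Qed.

Lemma A_self e : ~~ bridge e -> e \in A e.
Proof. by move=> nb; apply/A_char; split => //; left. Qed.

Lemma A_eq e0 e : e0 \in A e -> A e0 = A e.
Proof.
move=> /A_char [nb0 nbe R]; apply/setP => e1; apply/idP/idP.
  move/A_char => [nb1 _ R1]; apply/A_char; split => //; exact: Rpm_trans R1 R.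
move/A_char => [nb1 _ R1]; apply/A_char; split => //.
exact: (Rpm_trans R1 (Rpm_sym R)).
Qed.

Lemma not_both e0 e : ~~ bridge e0 -> e \in cut_class e0 -> inv e \in cut_class e0 -> False.
Proof.
move=> nb0 /(cut_class_char _ nb0) [_ R1] /(cut_class_char _ nb0) [_ R2].
have [g [cg g1]] := nb_cycle nb0.
have := R2 _ cg; rewrite (cycle_antis cg) R1 // g1 => h; lra.
Qed.

Lemma sum_ind_mul (T : finType) (a : T) (c : rat) : \sum_i (i == a)%:R * c = c.
Proof. by rewrite -mulr_suml (sum_ind predT a) mul1r. Qed.

Lemma fs_val e0 e : ~~ bridge e0 -> formal_sum (cut_class e0) e = (e0 \in A e)%:R.
Proof.
move=> nb0; rewrite ffunE.
have -> : \sum_(e' in cut_class e0 | same_class e e') (1 : rat) =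
   \sum_e' ((e' == e)%:R * (e \in cut_class e0)%:R + (e' == inv e)%:R * (inv e \in cut_class e0)%:R).
  rewrite big_mkcond /=; apply: eq_bigr => e' _; rewrite /same_class.
  case: (eqVneq e' e) => [->|ne].
    by rewrite neq_inv /=; case: (e \in _); rewrite ?mul1r ?mul0r ?addr0.
  case: (eqVneq e' (inv e)) => [->|ni] /=; last by rewrite andbF !mul0r addr0.
  by case: (inv e \in _); rewrite ?mul1r ?mul0r ?add0r ?andbT.
rewrite big_split /= !sum_ind_mul [e0 \in A e]inE nb0 /=.
case E1: (e \in cut_class e0); case E2: (inv e \in cut_class e0) => //=.
- by exfalso; exact: (not_both nb0 E1 E2).
Qed.

Lemma ext_pairingE u w e : antis u -> antis w ->
  ext_pairing u w e = 2 * (u e * w e).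
Proof.
move=> au aw; rewrite ffunE /same_class (bigD1 e) ?eqxx //=.
rewrite (big_pred1 (inv e)) => [|e'].
  by rewrite au aw mulrNN; ring.
rewrite /=; case: (eqVneq e' (inv e)) => [->|ne]; first by rewrite orbT inv_neq.
by rewrite orbF; case: eqP.
Qed.

Definition RHSp (y : {ffun E -> rat}) := exists C, max_cut_system C /\ y = formal_sum C.
Definition LHSp (y : {ffun E -> rat}) := exists g0 g1, is_cycle g0 /\ is_cycle g1 /\ y = ext_pairing g0 g1.

Lemma pair_in_span g0 g1 : is_cycle g0 -> is_cycle g1 -> in_span RHSp (ext_pairing g0 g1).
Proof.
move=> c0 c1; set f := ext_pairing g0 g1.
have fE e : f e = 2 * (g0 e * g1 e) by apply: ext_pairingE; apply: cycle_antis.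
have fA e0 e : e0 \in A e -> f e0 = f e.
  case/A_char => _ _ [] R; rewrite !fE.
    by rewrite (R _ c0) (R _ c1).
  by rewrite -(R _ c0) -(R _ c1) (cycle_antis c0) (cycle_antis c1) mulrNN.
have -> : f = [ffun e => \sum_(e0 | ~~ bridge e0) (f e0 / #|A e0|%:R) * formal_sum (cut_class e0) e].
  apply/ffunP => e; rewrite [in RHS]ffunE.
  under eq_bigr => e0 nb0 do rewrite fs_val //.
  have -> : \sum_(e0 | ~~ bridge e0) f e0 / #|A e0|%:R * (e0 \in A e)%:R =
            \sum_(e0 in A e) f e / #|A e|%:R.
    rewrite [RHS]big_mkcond /= [LHS]big_mkcond /=; apply: eq_bigr => e0 _.
    case: (boolP (e0 \in A e)) => Ae.
      rewrite (fA _ _ Ae) (A_eq Ae) mulr1; case/A_char: Ae => -> //.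
    by rewrite mulr0; case: (~~ bridge e0).
  rewrite sumr_const; case: (eqVneq #|A e| 0%N) => [z|nz].
    rewrite z mulr0n; case: (boolP (bridge e)) => [br|nb].
      by rewrite fE (bridge_zero br c0) mul0r mulr0.
    by move: z; rewrite (cardD1 e) A_self.
  by rewrite -(mulr_natr (f e / #|A e|%:R)) divfK // pnatr_eq0.
apply: in_span_sum => e0 nb0; exists (cut_class e0); split => //.
by exists e0.
Qed.


Lemma is_cycleD u w : is_cycle u -> is_cycle w -> is_cycle (u + w).
Proof.
case=> au du [] aw dw; split; first exact: antisD.
by move=> v; rewrite -[\sum_(e | _) _]/(dv _ v) dvD /dv du dw addr0.
Qed.

Lemma is_cycleN u : is_cycle u -> is_cycle (- u).
Proof.
case=> au du; split; first exact: antisN.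
by move=> v; rewrite -[\sum_(e | _) _]/(dv _ v) dvN /dv du oppr0.
Qed.

Lemma in_C (e0 : E) : ~~ bridge e0 -> e0 \in cut_class e0.
Proof. by move=> nb; rewrite inE nb eqxx. Qed.

Lemma two_cycles (e0 : E) : ~~ bridge e0 -> exists u v, [/\ is_cycle u, is_cycle v &
  forall e, u e * v e = formal_sum (cut_class e0) e].
Proof.
move=> nb0.
have [py [ppy lpy upy]] := conn_upath (nonbridge_conn nb0 (tg e0) (s e0)).
set H := rm1 e0 in ppy *.
set y := wc H (tg e0) py.
have cY : is_cycle (cw H e0 py) := cw_cycle ppy lpy.
have dvy v : dv y v = (tg e0 == v)%:R - (s e0 == v)%:R by rewrite /y wc_dv // lpy.
have ay : antis y := wc_antis _ _ _.
have H0 : ~~ H e0 /\ ~~ H (inv e0) by rewrite /H /rm1 !eqxx /= andbF.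
have y0 e : ~~ H e -> y e = 0.
  by move=> nH; apply: wc_out => //; move: nH; rewrite /H rm1_sym.
pose Cpm e := (e \in cut_class e0) || (inv e \in cut_class e0).
pose R := fun e => H e && (Cpm e || (y e != 1)).
have reach_z : connect (adj R) (tg e0) (s e0).
  apply/negPn/negP => nS.
  set S := connect (adj R) (tg e0).
  have sum1 : \sum_(e | S (s e) && ~~ S (tg e)) y e = 1.
    rewrite cut_sum //; under eq_bigr do rewrite dvy.
    rewrite sumrB.
    under eq_bigr do rewrite eq_sym.
    under [X in _ - X]eq_bigr do rewrite eq_sym.
    by rewrite !sum_ind /S connect0 (negbTE nS) subr0.
  pose L := [set e | S (s e) && ~~ S (tg e) && H e].
  have sumL : \sum_(e | S (s e) && ~~ S (tg e)) y e = #|L|%:R.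
    rewrite (bigID H) /= [X in _ + X]big1 ?addr0; last by move=> e /andP[_ /y0].
    rewrite -sumr_const; apply: eq_big => [e|e /andP[/andP[Se nSe] He]]; first by rewrite inE.
    have nR : ~~ R e by apply: contra nSe => Re; apply: conn_step.
    by move: nR; rewrite /R He /= negb_or negbK => /andP[_ /eqP].
  have : #|L| == 1%N by rewrite -(eqr_nat rat) -sumL sum1.
  case/cards1P => g Lg.
  have gL : g \in L by rewrite Lg set11.
  move: (gL); rewrite inE => /andP[/andP[Sg nSg] Hg].
  have Lonly e : S (s e) -> ~~ S (tg e) -> H e -> e = g.
    move=> h1 h2 h3; have : e \in L by rewrite inE h1 h2 h3.
    by rewrite Lg inE => /eqP.
  have nRg : ~~ R g by apply: contra nSg => Re; apply: conn_step.
  move: nRg; rewrite /R Hg /= negb_or negbK => /andP[nCg /eqP yg1].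
  move: (Hg); rewrite /H /rm1 => /andP[ng0 ngi0].
  have nbg : ~~ bridge g.
    apply/negP => br; have := bridge_zero br cY.
    by rewrite /cw ffunE uc_other // add0r -/y yg1 => /eqP; rewrite oner_eq0.
  have cp : cut_pair e0 g.
    apply/and5P; split => //; apply/negP => c.
    have c' : connect (adj (rm2 e0 g)) (s g) (s e0).
      by rewrite conn_sym //; apply: rm2_sym.
    have : S (s e0).
      apply: (closed_conn (P := rm2 e0 g) (S := S) (x := s g) _ Sg c').
      move=> e' R2 Se'; apply/negPn/negP => nSe'.
      have He' : H e' by move: R2; rewrite /rm2 /H /rm1 => /and4P[-> ->].
      have := Lonly e' Se' nSe' He' => ee; move: R2; rewrite ee /rm2 eqxx.
      by rewrite !andbF.
    by rewrite /S (negbTE nS).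
  have : g \in cut_class e0 by rewrite inE nbg cp orbT.
  by move: nCg; rewrite /Cpm => /norP[/negP].
have [pz [ppz lpz upz]] := conn_upath reach_z.
set z := wc R (tg e0) pz.
have cZ : is_cycle (cw R e0 pz) := cw_cycle ppz lpz.
have dvz v : dv z v = (tg e0 == v)%:R - (s e0 == v)%:R by rewrite /z wc_dv // lpz.
have az : antis z := wc_antis _ _ _.
have RH e : R e -> H e by case/andP.
have z0 e : ~~ H e -> z e = 0.
  move=> nH; apply: wc_out; first by apply: contra nH; apply: RH.
  by apply: contra nH => /RH; rewrite /H rm1_sym.
pose f := y + z.
pose D := fun e => H e && (0 < f e).
have reach_q : connect (adj D) (tg e0) (s e0).
  apply/negPn/negP => nS.
  set S := connect (adj D) (tg e0).
  have sum2 : \sum_(e | S (s e) && ~~ S (tg e)) f e = 2.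
    rewrite cut_sum; last exact: antisD.
    under eq_bigr do rewrite dvD dvy dvz.
    rewrite big_split sumrB.
    under eq_bigr do rewrite eq_sym.
    under [X in _ - X]eq_bigr do rewrite eq_sym.
    by rewrite !sum_ind /S connect0 (negbTE nS) /= subr0.
  have : \sum_(e | S (s e) && ~~ S (tg e)) f e <= 0.
    apply: sumr_le0 => e /andP[Se nSe].
    have nD : ~~ D e by apply: contra nSe => De; apply: conn_step.
    case: (boolP (H e)) => He; last by rewrite /f ffunE y0 ?z0 // addr0.
    by move: nD; rewrite /D He /= -leNgt.
  by rewrite sum2.
have [pq [ppq lpq upq]] := conn_upath reach_q.
set q := wc D (tg e0) pq.
have cQ : is_cycle (cw D e0 pq) := cw_cycle ppq lpq.
exists (cw D e0 pq), (cw H e0 py + cw R e0 pz - cw D e0 pq); split => //.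
  by apply: is_cycleD; [apply: is_cycleD | apply: is_cycleN].
have cV : is_cycle (cw H e0 py + cw R e0 pz - cw D e0 pq).
  by apply: is_cycleD; [apply: is_cycleD | apply: is_cycleN].
have DH e : D e -> H e by case/andP.
have out (X : pred E) (p1 : seq V) : (forall e, X e -> H e) -> cw X e0 p1 e0 = 1.
  move=> XH; rewrite cw_out ?uc_self //.
    exact: (contra (XH e0) (proj1 H0)).
  exact: (contra (XH (inv e0)) (proj2 H0)).
move=> e; rewrite fs_val // inE nb0 /=.
set U := cw D e0 pq; set W := cw H e0 py + cw R e0 pz - cw D e0 pq.
have U0 : U e0 = 1 by apply: out.
have W0 : W e0 = 1.
  have evD (a b c : {ffun E -> rat}) x : (a + b - c) x = a x + b x - c x by rewrite !ffunE.
  by rewrite /W evD !out //.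
case E1: (e \in cut_class e0).
  have [_ Re] := proj1 (cut_class_char e nb0) E1.
  by rewrite /= (Re _ cQ) (Re _ cV) -/U -/W U0 W0 mulr1.
case E2: (inv e \in cut_class e0).
  have [_ Re] := proj1 (cut_class_char (inv e) nb0) E2.
  have hu := Re _ cQ; have hw := Re _ cV.
  rewrite -/U -/W (cycle_antis cQ) U0 in hu; rewrite -/W (cycle_antis cV) W0 in hw.
  have -> : U e = -1 by rewrite -[U e]opprK hu.
  have -> : W e = -1 by rewrite -[W e]opprK hw.
  by rewrite mulrNN mulr1.
have ne0 : e != e0 by apply: contraFN E1 => /eqP ->; apply: in_C.
have nie0 : e != inv e0 by apply: contraFN E2 => /eqP ->; rewrite invK in_C.
have -> : U e = q e by rewrite /U /cw ffunE uc_other // add0r.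
have -> : W e = y e + z e - q e.
  by rewrite /W !ffunE (negbTE ne0) (negbTE nie0) subrr !add0r.
have nC : Cpm e = false by rewrite /Cpm E1 E2.
have nCi : Cpm (inv e) = false by rewrite /Cpm invK E1 E2 orbF.
apply: arith.
- by case/or3P: (wc_simple H e upy) => [/eqP|/andP[/eqP ->]|/andP[/eqP ->]]; [constructor 1|constructor 2|constructor 3].
- case/or3P: (wc_simple R e upz) => [/eqP|/andP[/eqP ->]|/andP[/eqP ->]]; first by constructor 1.
    by rewrite /R nC /= => /andP[_ h]; constructor 2.
  rewrite /R nCi /= ay => /andP[_ h]; constructor 3; split => //.
  by apply: contra h => /eqP ->; rewrite opprK.
- case/or3P: (wc_simple D e upq) => [/eqP|/andP[/eqP ->]|/andP[/eqP ->]]; first by constructor 1.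
    by rewrite /D /f ffunE => /andP[_ h]; constructor 2.
  rewrite /D /f ffunE ay az => /andP[_ h]; constructor 3; split => //.
  by rewrite -oppr_gt0 opprD.
Qed.


Lemma fs_in_span (e0 : E) : ~~ bridge e0 -> in_span LHSp (formal_sum (cut_class e0)).
Proof.
move=> nb0; have [u [v [cu cv h]]] := two_cycles nb0.
have -> : formal_sum (cut_class e0) = [ffun t => (1 / 2) * ext_pairing u v t].
  apply/ffunP => e; rewrite [RHS]ffunE ext_pairingE; try exact: cycle_antis.
  by rewrite -[LHS]h; field.
by apply: in_spanZ; apply: in_span_gen; exists u, v.
Qed.

End Main.

Theorem lemma9p21 (G : graph) :
  gconnected G ->
  forall x : {ffun edge G -> rat},
    in_span (fun y => exists g0 g1, is_cycle g0 /\ is_cycle g1 /\ y = ext_pairing g0 g1) x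
    <-> in_span (fun y => exists C, max_cut_system C /\ y = formal_sum C) x.
Proof.
move=> gc x; split => h.
  apply: (in_span_mono h) => y [g0 [g1 [c0 [c1 ->]]]]; exact: pair_in_span.
apply: (in_span_mono h) => y [C [[e0 [nb0 ->]] ->]]; exact: fs_in_span.
Qed.
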